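(* Let $U\subset\mathbb{R}^n$ be open, let $u\in C^2(U)$ with $u>0$, and let $w=\log u$. Define $$Qw=\Delta w-\frac{D^2w(Dw,Dw)}{1+|Dw|^2}+|Dw|^2 .$$ Then $$\operatorname{div}\frac{u\,Du}{\sqrt{u^2+|Du|^2}}\ge 0 \iff Qw\ge 0,\qquad \operatorname{div}\frac{u\,Du}{\sqrt{u^2+|Du|^2}}\le 0 \iff Qw\le 0,$$ and $$\operatorname{div}\frac{u\,Du}{\sqrt{u^2+|Du|^2}}= 0 \iff Qw= 0 .$$
   Context: $Du$ denotes the gradient, $D^2w$ the Hessian of $w$, and $D^2w(Dw,Dw)=\sum_{i,j}\partial_i\partial_j w\,\partial_i w\,\partial_j w$. *)

(* Defs.v *)
From HB Require Import structures.
From mathcomp Require Import all_boot all_order all_algebra.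
From mathcomp Require Import all_classical all_reals all_analysis.
Set Implicit Arguments. Unset Strict Implicit. Unset Printing Implicit Defensive.
Import Order.TTheory GRing.Theory Num.Theory.
Import numFieldNormedType.Exports.
Local Open Scope classical_set_scope.
Local Open Scope ring_scope.

Section Defs.
Variables (R : realType) (n : nat).
Local Notation V := 'rV[R]_n.

Definition evec (i : 'I_n) : V := delta_mx 0 i.

Definition pd (f : V -> R) (i : 'I_n) : V -> R := fun x => derive f x (evec i).

Definition pd2 (f : V -> R) (i j : 'I_n) : V -> R := pd (pd f j) i.

Definition grad_sq (f : V -> R) (x : V) : R := \sum_(i < n) (pd f i x) ^+ 2.

Definition laplacian (f : V -> R) (x : V) : R := \sum_(i < n) pd2 f i i x.

Definition hess_grad_grad (f : V -> R) (x : V) : R :=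
  \sum_(i < n) \sum_(j < n) pd2 f i j x * pd f i x * pd f j x.

Definition divergence (F : 'I_n -> V -> R) (x : V) : R := \sum_(i < n) pd (F i) i x.

Definition C2_on (U : set V) (f : V -> R) : Prop :=
  forall x, U x ->
    [/\ {for x, continuous f},
        (forall i, derivable f x (evec i) /\ {for x, continuous (pd f i)}) &
        (forall i j, derivable (pd f j) x (evec i) /\ {for x, continuous (pd2 f i j)})].

Definition Qop (w : V -> R) (x : V) : R :=
  laplacian w x - hess_grad_grad w x / (1 + grad_sq w x) + grad_sq w x.

Definition flux (u : V -> R) : 'I_n -> V -> R :=
  fun i y => u y * pd u i y / Num.sqrt (u y ^+ 2 + grad_sq u y).

End Defs.

(* Main.v *)
Require Import Defs.
From HB Require Import structures.
From mathcomp Require Import all_boot all_order all_algebra.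
From mathcomp Require Import all_classical all_reals all_analysis.
From mathcomp Require Import ring lra.
Import Order.TTheory GRing.Theory Num.Theory.
Import numFieldNormedType.Exports.
Local Open Scope classical_set_scope.
Local Open Scope ring_scope.

Set Implicit Arguments.
Section Helpers.
Variables (R : realType) (n : nat).
Local Notation V := 'rV[R]_n.
Implicit Types (f g : V -> R) (x v : V).

Lemma isd_ext f g x v d : (forall y, f y = g y) -> is_derive x v f d -> is_derive x v g d.
Proof. by move=> fg; have -> : f = g by apply/funext. Qed.

Lemma isdM f g x v a b : is_derive x v f a -> is_derive x v g b ->
  is_derive x v (fun y => f y * g y) (f x * b + g x * a).
Proof. move=> ha hb; have := is_deriveM ha hb; exact: isd_ext. Qed.

Lemma isdD f g x v a b : is_derive x v f a -> is_derive x v g b ->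
  is_derive x v (fun y => f y + g y) (a + b).
Proof. move=> ha hb; have := is_deriveD ha hb; exact: isd_ext. Qed.

Lemma isdV f x v a : f x != 0 -> is_derive x v f a ->
  is_derive x v (fun y => (f y)^-1) (- (f x) ^- 2 * a).
Proof. move=> fx [ha <-]; split; [exact: derivableV|exact: deriveV]. Qed.

Lemma isdsum (h : 'I_n -> V -> R) x v (dh : 'I_n -> R) :
  (forall i, is_derive x v (h i) (dh i)) ->
  is_derive x v (fun y => \sum_(i < n) h i y) (\sum_(i < n) dh i).
Proof. move=> H; have := is_derive_sum H; apply: isd_ext => y; by rewrite fct_sumE. Qed.

Lemma deriveP1 f x v : 'D_v f x = 'D_1 (fun h : R => f (h *: v + x)) 0.
Proof.
rewrite /derive; set g1 := fun h => h^-1 *: _; set g2 := fun h => h^-1 *: _.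
suff -> : g1 = g2 by [].
by rewrite funeqE /g1 /g2 => h /=; rewrite addr0 scale0r add0r [_%:A]mulr1.
Qed.

Lemma isdcomp (g : R -> R) f x v a b :
  is_derive (f x) 1 g a -> is_derive x v f b ->
  is_derive x v (fun y => g (f y)) (a * b).
Proof.
move=> hg [hf <-].
have h1 := (derivable1P f x v).1 hf.
have e0 : (fun h : R => f (h *: v + x)) 0 = f x by rewrite /= scale0r add0r.
have hg' : is_derive ((fun h : R => f (h *: v + x)) 0) 1 g a by rewrite e0.
have := @is_derive1_comp R g (fun h : R => f (h *: v + x)) 0 a _ hg' (derivableP h1).
move=> [c1 c2]; split.
  by apply/derivable1P.
by rewrite deriveP1 (deriveP1 f x v) -c2.
Qed.

Lemma isdX2 f x v a : is_derive x v f a ->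
  is_derive x v (fun y => f y ^+ 2) (2 * f x * a).
Proof.
move=> ha; apply: (@isd_ext (fun y => f y * f y)); first by move=> y; rewrite expr2.
apply: is_derive_eq (isdM ha ha) _; ring.
Qed.

Lemma sumlin2 (F1 F2 : 'I_n -> R) c1 c2 :
  \sum_(i < n) (c1 * F1 i - c2 * F2 i) = c1 * \sum_(i < n) F1 i - c2 * \sum_(i < n) F2 i.
Proof. by rewrite big_split /= sumrN -!mulr_sumr. Qed.

Lemma sumlin1 (F1 F2 : 'I_n -> R) c1 :
  \sum_(i < n) (c1 * F1 i + F2 i) = c1 * \sum_(i < n) F1 i + \sum_(i < n) F2 i.
Proof. by rewrite big_split /= -!mulr_sumr. Qed.

End Helpers.

Theorem mainTheorem1 (R : realType) (n : nat) (U : set 'rV[R]_n)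
  (u : 'rV[R]_n -> R) :
  open U -> C2_on U u -> (forall x, U x -> 0 < u x) ->
  let w := fun y => ln (u y) in
  forall x, U x ->
    [/\ (0 <= divergence (flux u) x <-> 0 <= Qop w x),
        (divergence (flux u) x <= 0 <-> Qop w x <= 0) &
        (divergence (flux u) x = 0 <-> Qop w x = 0)].
Proof.
move=> oU hC hpos w x Ux.
have hu y i : U y -> is_derive y (evec R i) u (pd u i y).
  by move=> Uy; have [_ H1 _] := hC y Uy; apply: derivableP; case: (H1 i).
have hp i j : is_derive x (evec R i) (pd u j) (pd2 u i j x).
  by have [_ _ H2] := hC x Ux; apply: derivableP; case: (H2 i j).
have nU : \forall y \near x, U y by apply: open_nbhs_nbhs; split.
set a := u x.
have a0 : 0 < a by exact: hpos.
have hw y j : U y -> is_derive y (evec R j) w ((u y)^-1 * pd u j y).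
  move=> Uy; apply: isdcomp (hu _ _ Uy).
  exact: is_derive1_ln (hpos _ Uy).
have pw j : pd w j x = a^-1 * pd u j x.
  by rewrite /pd; have [_ ->] := hw x j Ux.
have pw2 i j : pd2 w i j x = a^-1 * pd2 u i j x + pd u j x * (- a ^- 2 * pd u i x).
  rewrite /pd2 /pd.
  rewrite (@near_eq_derive _ _ _ (fun y => derive w y (evec R j)) (fun y => (u y)^-1 * pd u j y)); last first.
    by apply: filterS nU => y Uy; have [_ ->] := hw y j Uy.
  have := isdM (isdV (lt0r_neq0 a0) (hu x i Ux)) (hp i j).
  by move=> [_ ->].
set G := grad_sq u x.
have G0 : 0 <= G by rewrite /G /grad_sq; apply: sumr_ge0 => j _; exact: sqr_ge0.
have S0 : 0 < a ^+ 2 + G by have := exprn_gt0 2 a0; lra.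
set t := Num.sqrt (a ^+ 2 + G).
have t0 : 0 < t by rewrite sqrtr_gt0.
have tS : t ^+ 2 = a ^+ 2 + G by rewrite sqr_sqrtr // ltW.
have dflux i : pd (flux u i) i x = a * pd u i x * (- t ^- 2 * ((2 * t)^-1 *
     (2 * a * pd u i x + \sum_(j < n) 2 * pd u j x * pd2 u i j x)))
     + t^-1 * (a * pd2 u i i x + pd u i x * pd u i x).
  have hS : is_derive x (evec R i) (fun y => u y ^+ 2 + grad_sq u y)
      (2 * a * pd u i x + \sum_(j < n) 2 * pd u j x * pd2 u i j x).
    apply: isdD (isdX2 (hu x i Ux)) _; rewrite /grad_sq.
    apply: (@isdsum _ _ (fun j y => pd u j y ^+ 2)) => j; exact: isdX2 (hp i j).
  have hq := isdcomp (is_derive1_sqrt S0) hS.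
  have hinv := isdV (lt0r_neq0 t0) hq.
  have hpr := isdM (hu x i Ux) (hp i i).
  have := isdM hpr hinv.
  by rewrite /pd /flux; move=> [_ ->].
set L := \sum_(i < n) pd2 u i i x.
set H := \sum_(i < n) \sum_(j < n) pd2 u i j x * pd u i x * pd u j x.
have ta : t != 0 by exact: lt0r_neq0.
have an : a != 0 by exact: lt0r_neq0.
have divE : divergence (flux u) x =
   t^-1 * a * L + (t^-1 - t^-3 * a ^+ 2) * G - t^-3 * a * H.
  rewrite /divergence (eq_bigr (fun i => t^-1 * a * pd2 u i i x +
    ((t^-1 - t^-3 * a ^+ 2) * (pd u i x ^+ 2) - t^-3 * a *
       (\sum_(j < n) pd2 u i j x * pd u i x * pd u j x)))); last first.
    move=> i _; rewrite dflux.
    have e1 : \sum_(j < n) 2 * pd u j x * pd2 u i j x =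
        2 * \sum_(j < n) pd u j x * pd2 u i j x.
      by rewrite mulr_sumr; apply: eq_bigr => j _; rewrite mulrA.
    have e2 : \sum_(j < n) pd2 u i j x * pd u i x * pd u j x =
        pd u i x * \sum_(j < n) pd u j x * pd2 u i j x.
      by rewrite mulr_sumr; apply: eq_bigr => j _; ring.
    rewrite e1 e2; field.
    exact: ta.
  rewrite (@sumlin1 _ _ (fun i => pd2 u i i x)) (@sumlin2 _ _ (fun i => pd u i x ^+ 2) (fun i => \sum_(j < n) pd2 u i j x * pd u i x * pd u j x)).
  by rewrite /L /G /H /grad_sq addrA.
have gw : grad_sq w x = a ^- 2 * G.
  rewrite /G /grad_sq mulr_sumr; apply: eq_bigr => i _; rewrite pw; field; try exact: an.
have lw : laplacian w x = a^-1 * L - a ^- 2 * G.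
  rewrite /laplacian (eq_bigr (fun i => a^-1 * pd2 u i i x - a ^- 2 * pd u i x ^+ 2)).
    by rewrite (@sumlin2 _ _ (fun i => pd2 u i i x) (fun i => pd u i x ^+ 2)).
  by move=> i _; rewrite pw2; field; try exact: an.
have hgw : hess_grad_grad w x = a ^- 3 * H - a ^- 4 * (G * G).
  rewrite /hess_grad_grad (eq_bigr (fun i => a ^- 3 *
     (\sum_(j < n) pd2 u i j x * pd u i x * pd u j x) - a ^- 4 * (pd u i x ^+ 2 * G))).
    rewrite (@sumlin2 _ _ (fun i => \sum_(j < n) pd2 u i j x * pd u i x * pd u j x)
       (fun i => pd u i x ^+ 2 * G)).
    by rewrite /H -mulr_suml.
  move=> i _; rewrite /G /grad_sq mulr_sumr mulr_sumr mulr_sumr -sumrB.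
  by apply: eq_bigr => j _; rewrite pw2 !pw; field; try exact: an.
have key : divergence (flux u) x = Qop w x * (a ^+ 2 / t).
  rewrite divE /Qop lw hgw gw.
  have -> : G = t ^+ 2 - a ^+ 2 by rewrite tS; ring.
  field; rewrite ta an /=.
  have -> : a ^+ 2 + (t ^+ 2 - a ^+ 2) = t ^+ 2 by ring.
  exact: expf_neq0.
have c0 : 0 < a ^+ 2 / t by rewrite divr_gt0 // exprn_gt0.
rewrite key; split.
- by rewrite pmulr_lge0.
- by rewrite pmulr_lle0.
- split; first by move/eqP; rewrite mulf_eq0 (negbTE (lt0r_neq0 c0)) orbF => /eqP.
  by move=> ->; rewrite mul0r.
Qed.
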